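(* Let $T_{13}=\mathbf{e}^1_1\otimes(\mathbf{e}^2_1\otimes\mathbf{e}^3_1+\mathbf{e}^2_2\otimes\mathbf{e}^3_3)+\mathbf{e}^1_2\otimes(\mathbf{e}^2_1\otimes\mathbf{e}^3_2+\mathbf{e}^2_3\otimes\mathbf{e}^3_3)\in\mathbb{C}^2\otimes\mathbb{C}^3\otimes\mathbb{C}^3$ (a tensor of rank $4$) and $\varphi(\mathbf{a},\mathbf{b},\mathbf{c})=a_1b_1c_1+a_2b_1c_2+a_1b_2c_3+a_2b_3c_3$. A rank-one tensor $P=\mathbf{a}\otimes\mathbf{b}\otimes\mathbf{c}$ lies in the forbidden locus of $T_{13}$ if and only if one of the following holds: (i) ($a_1c_1+a_2c_2=0$ or $a_1b_2+a_2b_3=0$), and not ($b_2=b_3=0$), and not ($c_1=c_2=0$); (ii) ($b_3c_1-b_2c_2=0$ or $a_1c_1+a_2c_2=0$ or $a_1b_2+a_2b_3=0$) and $\varphi(\mathbf{a},\mathbf{b},\mathbf{c})=0$.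
   Context: $\mathbf{e}^i_j$ is the $j$-th standard basis vector of the $i$-th factor and $\mathbf{a}=(a_1,a_2)$, $\mathbf{b}=(b_1,b_2,b_3)$, $\mathbf{c}=(c_1,c_2,c_3)$ are nonzero coordinate vectors. The rank of a tensor is the minimal number of rank-one tensors summing to it; $P$ is in the forbidden locus of $T$ if $\mathrm{rk}(T-\lambda P)\ge\mathrm{rk}(T)$ for all $\lambda\in\mathbb{C}$. *)

(* Defs.v *)
From mathcomp Require Import all_boot all_algebra.
From mathcomp Require Import boolp Rstruct.
From mathcomp.real_closed Require Import complex.
Set Implicit Arguments. Unset Strict Implicit. Unset Printing Implicit Defensive.
Import GRing.Theory.
Local Open Scope ring_scope.

Definition C : numClosedFieldType := (Rdefinitions.R)[i].

(* Tensors in C^2 (x) C^3 (x) C^3, as arrays of coefficients indexed by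
   'I_2 * 'I_3 * 'I_3 (indices 0-based: e^i_j corresponds to index j-1). *)
Definition tensor := {ffun 'I_2 * 'I_3 * 'I_3 -> C}.

Definition outer (a : 'rV[C]_2) (b c : 'rV[C]_3) : tensor :=
  [ffun ijk : 'I_2 * 'I_3 * 'I_3 => a 0 ijk.1.1 * b 0 ijk.1.2 * c 0 ijk.2].

Definition rank_le (T : tensor) (r : nat) : Prop :=
  exists (A : 'I_r -> 'rV[C]_2) (B Cc : 'I_r -> 'rV[C]_3),
    T = \sum_(i < r) outer (A i) (B i) (Cc i).

Lemma rank_le_exists (T : tensor) : exists r, rank_le T r.
Proof.
pose I := ('I_2 * 'I_3 * 'I_3)%type.
exists #|{: I}|.
exists (fun i => T (enum_val i) *: delta_mx 0 (enum_val i).1.1),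
  (fun i => delta_mx 0 (enum_val i).1.2), (fun i => delta_mx 0 (enum_val i).2).
apply/ffunP => x.
rewrite sum_ffunE.
rewrite (reindex (@enum_rank I)) /=; last first.
  by exists enum_val => y _; rewrite ?enum_valK ?enum_rankK.
rewrite (bigD1 x) //= big1 ?addr0.
  by rewrite enum_rankK ffunE !mxE !eqxx /= !mulr1.
move=> y yx; rewrite enum_rankK ffunE !mxE.
case: x yx => [[x1 x2] x3]; case: y => [[y1 y2] y3] /= yx.
case: (x1 =P y1) => [e1|_]; last by rewrite !mulr0 !mul0r.
case: (x2 =P y2) => [e2|_]; last by rewrite !mulr0 !mul0r.
case: (x3 =P y3) => [e3|_]; last by rewrite !mulr0.
by subst; rewrite eqxx in yx.
Qed.


Lemma rank_le_existsb (T : tensor) : exists r, `[< rank_le T r >].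
Proof. by have [r Hr] := rank_le_exists T; exists r; apply/asboolP. Qed.

Definition trank (T : tensor) : nat := ex_minn (rank_le_existsb T).

Definition forbidden (T P : tensor) : Prop :=
  forall lambda : C, (trank T <= trank (T - lambda *: P)%R)%N.

(* basis vectors, 0-based: e2 j = e^1_{j+1} in C^2, e3 j in C^3 *)
Definition e2 (j : 'I_2) : 'rV[C]_2 := delta_mx 0 j.
Definition e3 (j : 'I_3) : 'rV[C]_3 := delta_mx 0 j.

Definition T13 : tensor :=
  outer (e2 0) (e3 0) (e3 0) + outer (e2 0) (e3 1) (e3 2) +
  outer (e2 1) (e3 0) (e3 1) + outer (e2 1) (e3 2) (e3 2).

Definition x1 (a : 'rV[C]_2) := a 0 0.
Definition x2 (a : 'rV[C]_2) := a 0 1.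
Definition y1 (b : 'rV[C]_3) := b 0 0.
Definition y2 (b : 'rV[C]_3) := b 0 1.
Definition y3 (b : 'rV[C]_3) := b 0 2.

Definition phi (a : 'rV[C]_2) (b c : 'rV[C]_3) : C :=
  x1 a * y1 b * y1 c + x2 a * y1 b * y2 c + x1 a * y2 b * y3 c + x2 a * y3 b * y3 c.

(* Main.v *)
Require Import Defs.
From mathcomp Require Import all_boot all_algebra.
From mathcomp.real_closed Require Import complex.
From mathcomp Require Import boolp Rstruct ring.
Import GRing.Theory.
Local Open Scope ring_scope.

Lemma sum3 (V : nmodType) (F : 'I_3 -> V) : \sum_(i < 3) F i = F 0 + F 1 + F 2.
Proof.
rewrite !big_ord_recl big_ord0 addr0 addrA.
by congr (_ + _ + _); congr F; apply: val_inj.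
Qed.

Lemma sum2 (V : nmodType) (F : 'I_2 -> V) : \sum_(i < 2) F i = F 0 + F 1.
Proof.
rewrite !big_ord_recl big_ord0 addr0.
by congr (_ + _); congr F; apply: val_inj.
Qed.

Lemma prod3 (F : 'I_3 -> C) : \prod_(i < 3) F i = F 0 * F 1 * F 2.
Proof.
rewrite !big_ord_recl big_ord0 mulr1 mulrA.
by congr (_ * _ * _); congr F; apply: val_inj.
Qed.

Lemma det2 (A : 'M[C]_2) : \det A = A 0 0 * A 1 1 - A 0 1 * A 1 0.
Proof.
pose An := fun m n : nat => (A (inord m) (inord n) : C).
have AE : A = \matrix_(i, j) An i j.
  by apply/matrixP => i j; rewrite mxE /An !inord_val.
rewrite AE (expand_det_row _ 0) !big_ord_recl big_ord0 addr0 /cofactor !det_mx11 !mxE.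
clear AE; clearbody An.
repeat match goal with |- context [An ?n _] => let m := eval vm_compute in n in progress change n with m end.
repeat match goal with |- context [An _ ?n] => let m := eval vm_compute in n in progress change n with m end.
repeat match goal with |- context [GRing.exp _ ?n] => let m := eval vm_compute in n in progress change n with m end.
ring.
Qed.

Lemma det3 (A : 'M[C]_3) : \det A =
  A 0 0 * (A 1 1 * A 2 2 - A 1 2 * A 2 1)
  - A 0 1 * (A 1 0 * A 2 2 - A 1 2 * A 2 0)
  + A 0 2 * (A 1 0 * A 2 1 - A 1 1 * A 2 0).
Proof.
pose An := fun m n : nat => (A (inord m) (inord n) : C).
have AE : A = \matrix_(i, j) An i j.
  by apply/matrixP => i j; rewrite mxE /An !inord_val.
rewrite AE (expand_det_row _ 0) sum3 /cofactor !det2 !mxE.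
clear AE; clearbody An.
repeat match goal with |- context [An ?n _] => let m := eval vm_compute in n in progress change n with m end.
repeat match goal with |- context [An _ ?n] => let m := eval vm_compute in n in progress change n with m end.
repeat match goal with |- context [GRing.exp _ ?n] => let m := eval vm_compute in n in progress change n with m end.
ring.
Qed.

Lemma i2E : (inord 0 : 'I_2) = 0 /\ (inord 1 : 'I_2) = 1.
Proof. by split; apply: val_inj; rewrite /= inordK. Qed.
Lemma i3E : (inord 0 : 'I_3) = 0 /\ (inord 1 : 'I_3) = 1 /\ (inord 2 : 'I_3) = 2.
Proof. by split; [|split]; apply: val_inj; rewrite /= inordK. Qed.

Lemma tensor_ext (T1 T2 : tensor) :
  (forall i j k : nat, (i < 2)%N -> (j < 3)%N -> (k < 3)%N ->
    T1 (inord i, inord j, inord k) = T2 (inord i, inord j, inord k)) -> T1 = T2.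
Proof.
move=> H; apply/ffunP => [[[i j] k]].
by have := H i j k (ltn_ord i) (ltn_ord j) (ltn_ord k); rewrite !inord_val.
Qed.

Definition mk2 (x y : C) : 'rV[C]_2 := \row_(j < 2) (if val j == 0%N then x else y).
Definition mk3 (x y z : C) : 'rV[C]_3 :=
  \row_(j < 3) (if val j == 0%N then x else if val j == 1%N then y else z).

Lemma mk2E x y : mk2 x y 0 0 = x /\ mk2 x y 0 1 = y.
Proof. by rewrite !mxE. Qed.
Lemma mk3E x y z : mk3 x y z 0 0 = x /\ mk3 x y z 0 1 = y /\ mk3 x y z 0 2 = z.
Proof. by rewrite !mxE. Qed.

Lemma outerE a b c i j k : outer a b c (i, j, k) = a 0 i * b 0 j * c 0 k.
Proof. by rewrite ffunE. Qed.

Lemma ord2 (i : 'I_2) : i = 0 \/ i = 1.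
Proof. by case: i => [[|[|//]] Hi]; [left|right]; apply: val_inj. Qed.
Lemma ord3 (i : 'I_3) : i = 0 \/ i = 1 \/ i = 2.
Proof. by case: i => [[|[|[|//]]] Hi]; [left|right;left|right;right]; apply: val_inj. Qed.

Lemma all18 (P : 'I_2 * 'I_3 * 'I_3 -> Prop) :
  P (0,0,0) -> P (0,0,1) -> P (0,0,2) -> P (0,1,0) -> P (0,1,1) -> P (0,1,2) -> P (0,2,0) -> P (0,2,1) -> P (0,2,2) -> P (1,0,0) -> P (1,0,1) -> P (1,0,2) -> P (1,1,0) -> P (1,1,1) -> P (1,1,2) -> P (1,2,0) -> P (1,2,1) -> P (1,2,2) -> forall x, P x.
Proof.
move=> H0 H1 H2 H3 H4 H5 H6 H7 H8 H9 H10 H11 H12 H13 H14 H15 H16 H17 [[i j] k].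
case: (ord2 i) => ->; case: (ord3 j) => [->|[->|->]]; case: (ord3 k) => [->|[->|->]]; assumption.
Qed.

Ltac tcases := apply/ffunP; apply: all18.

Lemma T13E (i : 'I_2) (j k : 'I_3) : T13 (i, j, k) =
  if [|| (i == 0) && (j == 0) && (k == 0), (i == 0) && (j == 1) && (k == 2),
         (i == 1) && (j == 0) && (k == 1) | (i == 1) && (j == 2) && (k == 2)] then 1 else 0.
Proof.
case: (ord2 i) => ->; case: (ord3 j) => [->|[->|->]]; case: (ord3 k) => [->|[->|->]];
 rewrite !ffunE /e2 /e3 !mxE /=; ring.
Qed.

Lemma subE a b c l i j k : (T13 - l *: outer a b c) (i, j, k) =
  T13 (i, j, k) - l * (a 0 i * b 0 j * c 0 k).
Proof. by rewrite !ffunE. Qed.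

Lemma rank3_intro (T : tensor) A0 A1 A2 B0 B1 B2 C0 C1 C2 :
  T = outer A0 B0 C0 + outer A1 B1 C1 + outer A2 B2 C2 -> rank_le T 3.
Proof.
move=> ->.
exists (fun r : 'I_3 => if val r == 0%N then A0 else if val r == 1%N then A1 else A2).
exists (fun r : 'I_3 => if val r == 0%N then B0 else if val r == 1%N then B1 else B2).
exists (fun r : 'I_3 => if val r == 0%N then C0 else if val r == 1%N then C1 else C2).
by rewrite sum3.
Qed.

Lemma rank_leS (T : tensor) r : rank_le T r -> rank_le T r.+1.
Proof.
move=> [A [B [Cc ->]]].
exists (fun i : 'I_r.+1 => if insub (val i) is Some j then A j else 0).
exists (fun i : 'I_r.+1 => if insub (val i) is Some j then B j else 0).
exists (fun i : 'I_r.+1 => if insub (val i) is Some j then Cc j else 0).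
rewrite big_ord_recr /= insubF ?ltnn //.
have -> : outer 0 0 0 = 0 by apply/ffunP => x; rewrite !ffunE !mxE !mul0r.
rewrite addr0; apply: eq_bigr => i _.
by rewrite (insubT (fun m => m < r)%N (ltn_ord i)) /=; congr outer; congr (_ _); apply: val_inj.
Qed.

Lemma rank_le_mono (T : tensor) r r' : (r <= r')%N -> rank_le T r -> rank_le T r'.
Proof.
move=> /subnK <-; elim: (r' - r)%N => [|n IH] H; first by rewrite add0n.
by rewrite addSn; apply: rank_leS; apply: IH.
Qed.

Lemma trank_le (T : tensor) r : rank_le T r -> (trank T <= r)%N.
Proof. by rewrite /trank; case: ex_minnP => m _ H Hr; apply: H; apply/asboolP. Qed.

Lemma trank_spec (T : tensor) : rank_le T (trank T).
Proof. by rewrite /trank; case: ex_minnP => m /asboolP. Qed.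

Lemma rank4_T13 : rank_le T13 4.
Proof.
exists (fun r : 'I_4 => if val r == 0%N then e2 0 else if val r == 1%N then e2 0
   else if val r == 2%N then e2 1 else e2 1).
exists (fun r : 'I_4 => if val r == 0%N then e3 0 else if val r == 1%N then e3 1
   else if val r == 2%N then e3 0 else e3 2).
exists (fun r : 'I_4 => if val r == 0%N then e3 0 else if val r == 1%N then e3 2
   else if val r == 2%N then e3 1 else e3 2).
rewrite !big_ord_recl big_ord0 addr0 /= !addrA.
rewrite /T13. congr (_ + _ + _ + _).
Qed.


Section Decomp.
Variables (A : 'I_3 -> 'rV[C]_2) (B Cc : 'I_3 -> 'rV[C]_3).
Definition Bm : 'M[C]_3 := \matrix_(r, j) B r 0 j.
Definition Cm : 'M[C]_3 := \matrix_(r, k) Cc r 0 k.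
Definition ell (r : 'I_3) (s t : C) := s * A r 0 0 + t * A r 0 1.

Lemma decE i j k : (\sum_(r < 3) outer (A r) (B r) (Cc r)) (i, j, k) =
  A 0 0 i * B 0 0 j * Cc 0 0 k + A 1 0 i * B 1 0 j * Cc 1 0 k + A 2 0 i * B 2 0 j * Cc 2 0 k.
Proof. by rewrite sum_ffunE sum3 !ffunE. Qed.
End Decomp.

Definition Mw (T : tensor) (s t : C) : 'M[C]_3 :=
  \matrix_(j, k) (s * T (0, j, k) + t * T (1, j, k)).

Lemma det_Mw A B Cc s t :
  \det (Mw (\sum_(r < 3) outer (A r) (B r) (Cc r)) s t) =
  \det (Bm B) * \det (Cm Cc) * (ell A 0 s t * ell A 1 s t * ell A 2 s t).
Proof.
have -> : Mw (\sum_(r < 3) outer (A r) (B r) (Cc r)) s t =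
   (Bm B)^T *m diag_mx (\row_r ell A r s t) *m Cm Cc.
  apply/matrixP => j k; rewrite mul_mx_diag !mxE !sum3 !ffunE !mxE /ell; ring.
rewrite !det_mulmx det_tr det_diag prod3 !mxE; ring.
Qed.

Lemma natC_neq0 n : (n.+1%:R : C) != 0.
Proof. by rewrite Num.Theory.pnatr_eq0. Qed.

Lemma coef3 (p0 p1 p2 p3 : C) : (forall x, p0 + p1 * x + p2 * x ^+ 2 + p3 * x ^+ 3 = 0) ->
  [/\ p0 = 0, p1 = 0, p2 = 0 & p3 = 0].
Proof.
move=> H.
have h0 := H 0; have h1 := H 1; have h2 := H (-1); have h3 := H 2.
have e0 : p0 = 0 by rewrite -h0; ring.
have E2 : 2%:R * p2 = (p0 + p1 * 1 + p2 * 1 ^+ 2 + p3 * 1 ^+ 3) +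
   (p0 + p1 * (-1) + p2 * (-1) ^+ 2 + p3 * (-1) ^+ 3) - 2%:R * p0 by ring.
rewrite h1 h2 e0 mulr0 subr0 addr0 in E2.
have e2 : p2 = 0 by move/eqP: E2; rewrite mulf_eq0 (negbTE (natC_neq0 1)) => /eqP.
have E3 : 6%:R * p3 = (p0 + p1 * 2%:R + p2 * 2%:R ^+ 2 + p3 * 2%:R ^+ 3)
   - 2%:R * (p0 + p1 * 1 + p2 * 1 ^+ 2 + p3 * 1 ^+ 3) + p0 - 2%:R * p2 by ring.
rewrite h3 h1 e0 e2 !mulr0 !subr0 addr0 in E3.
have e3 : p3 = 0 by move/eqP: E3; rewrite mulf_eq0 (negbTE (natC_neq0 5)) => /eqP.
split => //.
by rewrite -h1 e0 e2 e3; ring.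
Qed.

Lemma pig_aux (a0 a1 a2 b0 b1 b2 : C) : a0 = 0 -> b0 * a1 * a2 = 0 ->
  b0 * (a1 * b2 + b1 * a2) = 0 -> b0 * b1 * b2 = 0 ->
  (a0 = 0 /\ b0 = 0) \/ (a1 = 0 /\ b1 = 0) \/ (a2 = 0 /\ b2 = 0).
Proof.
move=> -> h1 h2 h3.
have [->|b0n] := eqVneq b0 0; first by left.
move/eqP: h1; rewrite -mulrA mulf_eq0 (negbTE b0n) mulf_eq0 /= => /orP[]/eqP ea.
- move/eqP: h2; rewrite mulf_eq0 (negbTE b0n) /= ea mul0r add0r mulf_eq0 => /orP[]/eqP e.
  + by right; left.
  + move/eqP: h3; rewrite -mulrA mulf_eq0 (negbTE b0n) mulf_eq0 /= => /orP[]/eqP e'.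
    * by right; left.
    * by right; right.
- move/eqP: h2; rewrite mulf_eq0 (negbTE b0n) /= ea mulr0 addr0 mulf_eq0 => /orP[]/eqP e.
  + move/eqP: h3; rewrite -mulrA mulf_eq0 (negbTE b0n) mulf_eq0 /= => /orP[]/eqP e'.
    * by right; left.
    * by right; right.
  + by right; right.
Qed.

Lemma pig (a0 a1 a2 b0 b1 b2 : C) :
  (forall x, (a0 + x * b0) * (a1 + x * b1) * (a2 + x * b2) = 0) ->
  (a0 = 0 /\ b0 = 0) \/ (a1 = 0 /\ b1 = 0) \/ (a2 = 0 /\ b2 = 0).
Proof.
move=> H.
have [] := @coef3 (a0 * a1 * a2) (a0 * a1 * b2 + a0 * b1 * a2 + b0 * a1 * a2)
  (a0 * b1 * b2 + b0 * a1 * b2 + b0 * b1 * a2) (b0 * b1 * b2).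
  by move=> x; rewrite -(H x); ring.
move=> q0 q1 q2 q3.
move/eqP: (q0); rewrite !mulf_eq0 => /orP[/orP[]|]/eqP z.
- apply: pig_aux => //.
  + by rewrite -q1 z; ring.
  + by rewrite -q2 z; ring.
- have := @pig_aux a1 a0 a2 b1 b0 b2 z.
  case.
  + by rewrite -q1 z; ring.
  + by rewrite -q2 z; ring.
  + by rewrite -q3; ring.
  + by right; left.
  case; [by left | by right; right].
- have := @pig_aux a2 a0 a1 b2 b0 b1 z.
  case.
  + by rewrite -q1 z; ring.
  + by rewrite -q2 z; ring.
  + by rewrite -q3; ring.
  + by right; right.
  case; [by left | by right; left].
Qed.

Lemma mx3_ext (M N : 'M[C]_3) :
  (forall i j : 'I_3, (i = 0 \/ i = 1 \/ i = 2) -> (j = 0 \/ j = 1 \/ j = 2) -> M i j = N i j) -> M = N.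
Proof. by move=> H; apply/matrixP => i j; apply: H; apply: ord3. Qed.

Lemma det_ne0_l (X Y : 'M[C]_3) : \det X * \det Y = 1 -> \det X != 0 /\ \det Y != 0.
Proof.
move=> H; split; apply/eqP => E; move: H; rewrite E ?mul0r ?mulr0 => /eqP;
  by rewrite eq_sym oner_eq0.
Qed.

Lemma T13_not3 : ~ rank_le T13 3.
Proof.
move=> [A [B [Cc HT]]].
pose W := \matrix_(r, m) (A r 0 (if val m == 2%N then 1 else 0) *
     Cc r 0 (if val m == 0%N then 0 else 2)) : 'M[C]_3.
pose W' := \matrix_(m, r) (A r 0 (if val m == 1%N then 1 else 0) *
     B r 0 (if val m == 2%N then 1 else 0)) : 'M[C]_3.
have key i j k : T13 (i, j, k) = A 0 0 i * B 0 0 j * Cc 0 0 k +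
    A 1 0 i * B 1 0 j * Cc 1 0 k + A 2 0 i * B 2 0 j * Cc 2 0 k by rewrite HT decE.
have HN : (Bm B)^T *m W = 1%:M.
  have -> : (Bm B)^T *m W = \matrix_(j, m) T13 ((if val m == 2%N then 1 else 0),
      j, (if val m == 0%N then 0 else 2)).
    by apply/matrixP => j m; rewrite !mxE sum3 !mxE key; ring.
  by apply: mx3_ext => j m [->|[->|->]] [->|[->|->]]; rewrite !mxE /= !T13E /=; ring.
have HN' : W' *m (Cm Cc) = 1%:M.
  have -> : W' *m (Cm Cc) = \matrix_(m, k) T13 ((if val m == 1%N then 1 else 0),
      (if val m == 2%N then 1 else 0), k).
    by apply/matrixP => m k; rewrite !mxE sum3 !mxE key; ring.
  by apply: mx3_ext => j m [->|[->|->]] [->|[->|->]]; rewrite !mxE /= !T13E /=; ring.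
move: (HN) (HN') => /(congr1 determinant) + /(congr1 determinant).
rewrite !det_mulmx det_tr !det1 => /det_ne0_l [nB nW] /det_ne0_l [nW' nC].
have Hdet x : ell A 0 1 x * ell A 1 1 x * ell A 2 1 x = 0.
  have : \det (Mw T13 1 x) = 0.
    by rewrite det3 !mxE !T13E /=; ring.
  rewrite HT det_Mw => /eqP; rewrite !mulf_eq0 (negbTE nB) (negbTE nC) /=.
  by rewrite -!mulf_eq0 => /eqP.
have Hp : forall x, (A 0 0 0 + x * A 0 0 1) * (A 1 0 0 + x * A 1 0 1) * (A 2 0 0 + x * A 2 0 1) = 0.
  by move=> x; rewrite -(Hdet x) /ell; ring.
have dW0 : ~ (\det W = 0) by move=> E; move: nW; rewrite E eqxx.
by case: (@pig _ _ _ _ _ _ Hp) => [[h0 h1]|[[h0 h1]|[h0 h1]]]; apply: dW0; rewrite det3 !mxE /= h0 h1; ring.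
Qed.

Lemma dr_core (D e0 e1 e2 f0 f1 f2 K F m : C) :
  D * (e0 * e1 * e2) = 0 -> D * (e0 * e1 * f2 + e0 * f1 * e2 + f0 * e1 * e2) = 0 ->
  D * (e0 * f1 * f2 + f0 * e1 * f2 + f0 * f1 * e2) = K -> D * (f0 * f1 * f2) = F ->
  (K != 0 \/ F != 0) ->
  ((e0 = 0 /\ e1 = 0) \/ (e0 = 0 /\ e2 = 0) \/ (e1 = 0 /\ e2 = 0) -> m = 0) ->
  m != 0 -> False.
Proof.
move=> h0 h1 h2 h3 hKF hm nm.
have fin : K = 0 -> F = 0 -> False by move=> kz fz; case: hKF; rewrite ?kz ?fz eqxx.
have [D0|Dn] := eqVneq D 0.
  by apply: fin; [rewrite -h2 D0 | rewrite -h3 D0]; ring.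
move/eqP: h0; rewrite mulf_eq0 (negbTE Dn) /= !mulf_eq0 => h0.
have nz2 : forall x y : C, x != 0 -> y != 0 -> x * y != 0.
  by move=> x y xn yn; rewrite mulf_eq0 negb_or xn yn.
have [e0z|e0n] := eqVneq e0 0.
  have [e1z|e1n] := eqVneq e1 0; first by move: nm; rewrite hm ?eqxx //; left.
  have [e2z|e2n] := eqVneq e2 0; first by move: nm; rewrite hm ?eqxx //; right; left.
  have : D * (e1 * e2) * f0 = 0 by rewrite -h1 e0z; ring.
  move/eqP; rewrite mulf_eq0 (negbTE (nz2 _ _ Dn (nz2 _ _ e1n e2n))) /= => /eqP f0z.
  by apply: fin; [rewrite -h2 e0z f0z | rewrite -h3 f0z]; ring.
have [e1z|e1n] := eqVneq e1 0.
  have [e2z|e2n] := eqVneq e2 0; first by move: nm; rewrite hm ?eqxx //; right; right.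
  have : D * (e0 * e2) * f1 = 0 by rewrite -h1 e1z; ring.
  move/eqP; rewrite mulf_eq0 (negbTE (nz2 _ _ Dn (nz2 _ _ e0n e2n))) /= => /eqP f1z.
  by apply: fin; [rewrite -h2 e1z f1z | rewrite -h3 f1z]; ring.
move: h0; rewrite (negbTE e0n) (negbTE e1n) /= => /eqP e2z.
have : D * (e0 * e1) * f2 = 0 by rewrite -h1 e2z; ring.
move/eqP; rewrite mulf_eq0 (negbTE (nz2 _ _ Dn (nz2 _ _ e0n e1n))) /= => /eqP f2z.
by apply: fin; [rewrite -h2 e2z f2z | rewrite -h3 f2z]; ring.
Qed.

Definition minor (M : 'M[C]_3) (j1 j2 k1 k2 : 'I_3) :=
  M j1 k1 * M j2 k2 - M j1 k2 * M j2 k1.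

Lemma dr (T : tensor) (s0 t0 s1 t1 K F : C) (j1 j2 k1 k2 : 'I_3) :
  (forall x, \det (Mw T (s0 + x * s1) (t0 + x * t1)) = x ^+ 2 * (K + x * F)) ->
  (K != 0 \/ F != 0) ->
  minor (Mw T s0 t0) j1 j2 k1 k2 != 0 ->
  ~ rank_le T 3.
Proof.
move=> Hd HKF Hm [A [B [Cc HT]]].
pose D := \det (Bm B) * \det (Cm Cc).
pose e r := ell A r s0 t0. pose f r := ell A r s1 t1.
have H x : D * ((e 0 + x * f 0) * (e 1 + x * f 1) * (e 2 + x * f 2)) = x ^+ 2 * (K + x * F).
  by rewrite -Hd HT det_Mw /D /e /f /ell; ring.
have [] := @coef3 (D * (e 0 * e 1 * e 2)) (D * (e 0 * e 1 * f 2 + e 0 * f 1 * e 2 + f 0 * e 1 * e 2))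
  (D * (e 0 * f 1 * f 2 + f 0 * e 1 * f 2 + f 0 * f 1 * e 2) - K) (D * (f 0 * f 1 * f 2) - F).
  by move=> x; move/eqP: (H x); rewrite -subr_eq0 => /eqP <-; ring.
move=> q0 q1 /eqP q2 /eqP q3.
move: q2 q3; rewrite !subr_eq0 => /eqP q2 /eqP q3.
apply: (@dr_core D (e 0) (e 1) (e 2) (f 0) (f 1) (f 2) K F _ q0 q1 q2 q3 HKF _ Hm).
have ME j k : Mw T s0 t0 j k = e 0 * B 0 0 j * Cc 0 0 k + e 1 * B 1 0 j * Cc 1 0 k +
   e 2 * B 2 0 j * Cc 2 0 k by rewrite !mxE HT !decE /e /ell; ring.
by rewrite /minor !ME => -[[-> ->]|[[-> ->]|[-> ->]]]; ring.
Qed.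

Lemma scaleCE (l x : C) : l *: x = l * x.
Proof. by []. Qed.

Definition la (a : 'rV[C]_2) s t := s * a 0 0 + t * a 0 1.
Definition lb (b : 'rV[C]_3) s t := t * b 0 1 - s * b 0 2.
Definition lc (c : 'rV[C]_3) s t := t * c 0 0 - s * c 0 1.

Lemma la_lin a s0 t0 s1 t1 x : la a (s0 + x * s1) (t0 + x * t1) = la a s0 t0 + x * la a s1 t1.
Proof. rewrite /la; ring. Qed.
Lemma lb_lin b s0 t0 s1 t1 x : lb b (s0 + x * s1) (t0 + x * t1) = lb b s0 t0 + x * lb b s1 t1.
Proof. rewrite /lb; ring. Qed.
Lemma lc_lin c s0 t0 s1 t1 x : lc c (s0 + x * s1) (t0 + x * t1) = lc c s0 t0 + x * lc c s1 t1.
Proof. rewrite /lc; ring. Qed.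

Lemma MwE a b c l s t j k : Mw (T13 - l *: outer a b c) s t j k =
  s * T13 (0, j, k) + t * T13 (1, j, k) - l * la a s t * (b 0 j * c 0 k).
Proof. rewrite !mxE !subE /la; ring. Qed.

Lemma detTp a b c l s t :
  \det (Mw (T13 - l *: outer a b c) s t) = l * la a s t * lb b s t * lc c s t.
Proof.
rewrite det3 !MwE !T13E /= /la /lb /lc; ring.
Qed.

Lemma R1 (a : 'rV[C]_2) (b c : 'rV[C]_3) l : l != 0 -> (a 0 0 != 0 \/ a 0 1 != 0) ->
  a 0 0 * c 0 0 + a 0 1 * c 0 1 = 0 -> ~ (b 0 1 = 0 /\ b 0 2 = 0) ->
  ~ (c 0 0 = 0 /\ c 0 1 = 0) -> ~ rank_le (T13 - l *: outer a b c) 3.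
Proof.
move=> ln an g bn cn.
have la0 : la a (c 0 0) (c 0 1) = 0 by rewrite /la -g; ring.
have lc0 : lc c (c 0 0) (c 0 1) = 0 by rewrite /lc; ring.
have [c2z|c2n] := eqVneq (c 0 1) 0.
- have c1n : c 0 0 != 0 by apply/eqP => c1z; apply: cn.
  have a1z : a 0 0 = 0.
    by move/eqP: g; rewrite c2z mulr0 addr0 mulf_eq0 (negbTE c1n) orbF => /eqP.
  have a2n : a 0 1 != 0 by case: an => h //; move: h; rewrite a1z eqxx.
  apply: (@dr _ (c 0 0) (c 0 1) 0 1 (l * la a 0 1 * lc c 0 1 * lb b (c 0 0) (c 0 1))
     (l * la a 0 1 * lc c 0 1 * lb b 0 1) 0 1 0 2).
  + by move=> x; rewrite detTp la_lin lb_lin lc_lin la0 lc0; ring.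
  + have P : l * la a 0 1 * lc c 0 1 != 0.
      have -> : la a 0 1 = a 0 1 by rewrite /la; ring.
      have -> : lc c 0 1 = c 0 0 by rewrite /lc; ring.
      by rewrite !mulf_neq0.
    have [b2z|b2n] := eqVneq (b 0 1) 0.
      left; apply: mulf_neq0 => //.
      have -> : lb b (c 0 0) (c 0 1) = - (c 0 0 * b 0 2) by rewrite /lb c2z b2z; ring.
      rewrite oppr_eq0 mulf_neq0 //.
      by apply/eqP => b3z; apply: bn.
    by right; apply: mulf_neq0 => //; rewrite (_ : lb b 0 1 = b 0 1) // /lb; ring.
  + rewrite /minor !MwE la0 !T13E /=.
    by rewrite (_ : _ - _ = c 0 0 ^+ 2) ?expf_neq0 //; ring.
- have a1n : a 0 0 != 0.
    apply/eqP => a1z; move/eqP: g; rewrite a1z mul0r add0r mulf_eq0 (negbTE c2n) orbF => a2z.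
    by case: an => h; move: h; rewrite ?a1z ?(eqP a2z) eqxx.
  apply: (@dr _ (c 0 0) (c 0 1) 1 0 (l * la a 1 0 * lc c 1 0 * lb b (c 0 0) (c 0 1))
     (l * la a 1 0 * lc c 1 0 * lb b 1 0) 0 2 1 2).
  + by move=> x; rewrite detTp la_lin lb_lin lc_lin la0 lc0; ring.
  + have P : l * la a 1 0 * lc c 1 0 != 0.
      have -> : la a 1 0 = a 0 0 by rewrite /la; ring.
      have -> : lc c 1 0 = - c 0 1 by rewrite /lc; ring.
      by rewrite !mulf_neq0 // oppr_eq0.
    have [b3z|b3n] := eqVneq (b 0 2) 0.
      left; apply: mulf_neq0 => //.
      have -> : lb b (c 0 0) (c 0 1) = c 0 1 * b 0 1 by rewrite /lb b3z; ring.
      rewrite mulf_neq0 //.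
      by apply/eqP => b2z; apply: bn.
    by right; apply: mulf_neq0 => //; rewrite (_ : lb b 1 0 = - b 0 2) ?oppr_eq0 // /lb; ring.
  + rewrite /minor !MwE la0 !T13E /=.
    by rewrite (_ : _ - _ = c 0 1 ^+ 2) ?expf_neq0 //; ring.
Qed.

Lemma R2 (a : 'rV[C]_2) (b c : 'rV[C]_3) l : l != 0 -> (a 0 0 != 0 \/ a 0 1 != 0) ->
  a 0 0 * b 0 1 + a 0 1 * b 0 2 = 0 -> ~ (b 0 1 = 0 /\ b 0 2 = 0) ->
  ~ (c 0 0 = 0 /\ c 0 1 = 0) -> ~ rank_le (T13 - l *: outer a b c) 3.
Proof.
move=> ln an g bn cn.
have la0 : la a (b 0 1) (b 0 2) = 0 by rewrite /la -g; ring.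
have lb0 : lb b (b 0 1) (b 0 2) = 0 by rewrite /lb; ring.
have [b3z|b3n] := eqVneq (b 0 2) 0.
- have b2n : b 0 1 != 0 by apply/eqP => b2z; apply: bn.
  have a1z : a 0 0 = 0.
    by move/eqP: g; rewrite b3z mulr0 addr0 mulf_eq0 (negbTE b2n) orbF => /eqP.
  have a2n : a 0 1 != 0 by case: an => h //; move: h; rewrite a1z eqxx.
  apply: (@dr _ (b 0 1) (b 0 2) 0 1 (l * la a 0 1 * lb b 0 1 * lc c (b 0 1) (b 0 2))
     (l * la a 0 1 * lb b 0 1 * lc c 0 1) 0 1 0 2).
  + by move=> x; rewrite detTp la_lin lb_lin lc_lin la0 lb0; ring.
  + have P : l * la a 0 1 * lb b 0 1 != 0.
      have -> : la a 0 1 = a 0 1 by rewrite /la; ring.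
      have -> : lb b 0 1 = b 0 1 by rewrite /lb; ring.
      by rewrite !mulf_neq0.
    have [c1z|c1n] := eqVneq (c 0 0) 0.
      left; apply: mulf_neq0 => //.
      have -> : lc c (b 0 1) (b 0 2) = - (b 0 1 * c 0 1) by rewrite /lc c1z b3z; ring.
      rewrite oppr_eq0 mulf_neq0 //.
      by apply/eqP => c2z; apply: cn.
    by right; apply: mulf_neq0 => //; rewrite (_ : lc c 0 1 = c 0 0) // /lc; ring.
  + rewrite /minor !MwE la0 !T13E /=.
    by rewrite (_ : _ - _ = b 0 1 ^+ 2) ?expf_neq0 //; ring.
- have a1n : a 0 0 != 0.
    apply/eqP => a1z; move/eqP: g; rewrite a1z mul0r add0r mulf_eq0 (negbTE b3n) orbF => a2z.
    by case: an => h; move: h; rewrite ?a1z ?(eqP a2z) eqxx.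
  apply: (@dr _ (b 0 1) (b 0 2) 1 0 (l * la a 1 0 * lb b 1 0 * lc c (b 0 1) (b 0 2))
     (l * la a 1 0 * lb b 1 0 * lc c 1 0) 0 2 1 2).
  + by move=> x; rewrite detTp la_lin lb_lin lc_lin la0 lb0; ring.
  + have P : l * la a 1 0 * lb b 1 0 != 0.
      have -> : la a 1 0 = a 0 0 by rewrite /la; ring.
      have -> : lb b 1 0 = - b 0 2 by rewrite /lb; ring.
      by rewrite !mulf_neq0 // oppr_eq0.
    have [c2z|c2n] := eqVneq (c 0 1) 0.
      left; apply: mulf_neq0 => //.
      have -> : lc c (b 0 1) (b 0 2) = b 0 2 * c 0 0 by rewrite /lc c2z; ring.
      rewrite mulf_neq0 //.
      by apply/eqP => c1z; apply: cn.
    by right; apply: mulf_neq0 => //; rewrite (_ : lc c 1 0 = - c 0 1) ?oppr_eq0 // /lc; ring.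
  + rewrite /minor !MwE la0 !T13E /=.
    by rewrite (_ : _ - _ = b 0 2 ^+ 2) ?expf_neq0 //; ring.
Qed.

Lemma R3 (a : 'rV[C]_2) (b c : 'rV[C]_3) l : l != 0 ->
  a 0 0 * c 0 0 + a 0 1 * c 0 1 != 0 ->
  b 0 2 * c 0 0 - b 0 1 * c 0 1 = 0 -> phi a b c = 0 -> ~ (b 0 1 = 0 /\ b 0 2 = 0) ->
  ~ (c 0 0 = 0 /\ c 0 1 = 0) -> ~ rank_le (T13 - l *: outer a b c) 3.
Proof.
move=> ln gn g hphi bn cn.
have lb0 : lb b (c 0 0) (c 0 1) = 0.
  have -> : lb b (c 0 0) (c 0 1) = - (b 0 2 * c 0 0 - b 0 1 * c 0 1) by rewrite /lb; ring.
  by rewrite g oppr0.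
have lc0 : lc c (c 0 0) (c 0 1) = 0 by rewrite /lc; ring.
have la0 : la a (c 0 0) (c 0 1) = a 0 0 * c 0 0 + a 0 1 * c 0 1 by rewrite /la; ring.
have hb1 : b 0 0 * c 0 0 + b 0 1 * c 0 2 = 0.
  have : (a 0 0 * c 0 0 + a 0 1 * c 0 1) * (b 0 0 * c 0 0 + b 0 1 * c 0 2) = 0.
    rewrite (_ : _ * _ = c 0 0 * phi a b c - a 0 1 * c 0 2 * (b 0 2 * c 0 0 - b 0 1 * c 0 1)).
      by rewrite hphi g; ring.
    by rewrite /phi /x1 /x2 /y1 /y2 /y3; ring.
  by move/eqP; rewrite mulf_eq0 (negbTE gn) /= => /eqP.
have hb2 : b 0 0 * c 0 1 + b 0 2 * c 0 2 = 0.
  have : (a 0 0 * c 0 0 + a 0 1 * c 0 1) * (b 0 0 * c 0 1 + b 0 2 * c 0 2) = 0.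
    rewrite (_ : _ * _ = c 0 1 * phi a b c + a 0 0 * c 0 2 * (b 0 2 * c 0 0 - b 0 1 * c 0 1)).
      by rewrite hphi g; ring.
    by rewrite /phi /x1 /x2 /y1 /y2 /y3; ring.
  by move/eqP; rewrite mulf_eq0 (negbTE gn) /= => /eqP.
have [c2z|c2n] := eqVneq (c 0 1) 0.
- have c1n : c 0 0 != 0 by apply/eqP => c1z; apply: cn.
  have b3z : b 0 2 = 0.
    by move/eqP: g; rewrite c2z mulr0 subr0 mulf_eq0 (negbTE c1n) orbF => /eqP.
  have b2n : b 0 1 != 0 by apply/eqP => b2z; apply: bn.
  apply: (@dr _ (c 0 0) (c 0 1) 0 1 (l * la a (c 0 0) (c 0 1) * lb b 0 1 * lc c 0 1)
     (l * la a 0 1 * lb b 0 1 * lc c 0 1) 0 1 0 2).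
  + by move=> x; rewrite detTp la_lin lb_lin lc_lin lb0 lc0; ring.
  + left; rewrite la0 (_ : lb b 0 1 = b 0 1); last by rewrite /lb; ring.
    by rewrite (_ : lc c 0 1 = c 0 0) ?mulf_neq0 // /lc; ring.
  + rewrite (_ : minor _ _ _ _ _ = c 0 0 ^+ 2 - c 0 0 * (l * la a (c 0 0) (c 0 1)) *
       (b 0 0 * c 0 0 + b 0 1 * c 0 2)).
      by rewrite hb1 mulr0 subr0 expf_neq0.
    by rewrite /minor !MwE !T13E /=; ring.
- have b3n : b 0 2 != 0.
    apply/eqP => b3z; move/eqP: g; rewrite b3z mul0r sub0r oppr_eq0 mulf_eq0 (negbTE c2n) orbF => b2z.
    by apply: bn; split => //; apply/eqP.
  apply: (@dr _ (c 0 0) (c 0 1) 1 0 (l * la a (c 0 0) (c 0 1) * lb b 1 0 * lc c 1 0)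
     (l * la a 1 0 * lb b 1 0 * lc c 1 0) 0 2 1 2).
  + by move=> x; rewrite detTp la_lin lb_lin lc_lin lb0 lc0; ring.
  + left; rewrite la0 (_ : lb b 1 0 = - b 0 2); last by rewrite /lb; ring.
    by rewrite (_ : lc c 1 0 = - c 0 1) ?mulf_neq0 ?oppr_eq0 // /lc; ring.
  + rewrite (_ : minor _ _ _ _ _ = c 0 1 ^+ 2 - c 0 1 * (l * la a (c 0 0) (c 0 1)) *
       (b 0 0 * c 0 1 + b 0 2 * c 0 2)).
      by rewrite hb2 mulr0 subr0 expf_neq0.
    by rewrite /minor !MwE !T13E /=; ring.
Qed.

Lemma par (x1 x2 y1 y2 : C) : (x1 != 0 \/ x2 != 0) -> x1 * y2 - x2 * y1 = 0 ->
  exists k, y1 = k * x1 /\ y2 = k * x2.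
Proof.
move=> xn h.
have [x1z|x1n] := eqVneq x1 0.
  have x2n : x2 != 0 by case: xn => //; rewrite x1z eqxx.
  exists (y2 / x2); split; last by rewrite divfK.
  move: h; rewrite x1z mul0r sub0r => /eqP; rewrite oppr_eq0 mulf_eq0 (negbTE x2n) /= => /eqP ->.
  by rewrite mulr0.
exists (y1 / x1); split; first by rewrite divfK.
have E : x1 * y2 = x2 * y1 by apply/eqP; rewrite -subr_eq0 h.
by apply: (mulfI x1n); rewrite E; field.
Qed.

Definition actc (T : tensor) (h : 'M[C]_3) : tensor :=
  [ffun x => \sum_(m < 3) T (x.1.1, x.1.2, m) * h m x.2].
Definition actb (T : tensor) (h : 'M[C]_3) : tensor :=
  [ffun x => \sum_(m < 3) h x.1.2 m * T (x.1.1, m, x.2)].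

Lemma actcE T h i j k : actc T h (i, j, k) = \sum_(m < 3) T (i, j, m) * h m k.
Proof. by rewrite ffunE. Qed.
Lemma actbE T h i j k : actb T h (i, j, k) = \sum_(m < 3) h j m * T (i, m, k).
Proof. by rewrite ffunE. Qed.

Lemma actc_rank T h : rank_le T 3 -> rank_le (actc T h) 3.
Proof.
move=> [A [B [Cc ->]]]; exists A, B, (fun r => Cc r *m h).
apply/ffunP => -[[i j] k]; rewrite ffunE sum3 !decE ?sum_ffunE ?sum3 ?ffunE !mxE !sum3 ?mxE /=.
ring.
Qed.

Lemma actb_rank T h : rank_le T 3 -> rank_le (actb T h) 3.
Proof.
move=> [A [B [Cc ->]]]; exists A, (fun r => B r *m h^T), Cc.
apply/ffunP => -[[i j] k]; rewrite ffunE sum3 !decE ?sum_ffunE ?sum3 ?ffunE !mxE !sum3 ?mxE /=.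
ring.
Qed.

Lemma S1 (a : 'rV[C]_2) (b c : 'rV[C]_3) l : (a 0 0 != 0 \/ a 0 1 != 0) ->
  b 0 1 = 0 -> b 0 2 = 0 -> a 0 0 * c 0 0 + a 0 1 * c 0 1 = 0 ->
  ~ rank_le (T13 - l *: outer a b c) 3.
Proof.
move=> an b2z b3z g H; apply: T13_not3.
have [k [hc1 hc2]] : exists k, c 0 0 = k * - a 0 1 /\ c 0 1 = k * a 0 0.
  apply: par; first by case: an => h; [right|left]; rewrite ?oppr_eq0.
  have -> : - a 0 1 * c 0 1 - a 0 0 * c 0 0 = - (a 0 0 * c 0 0 + a 0 1 * c 0 1) by ring.
  by rewrite g oppr0.
pose h := \matrix_(m < 3, n < 3) ((m == n)%:R + l * b 0 0 *
   (if val m == 0%N then a 0 0 else if val m == 1%N then a 0 1 else 0) * c 0 n) : 'M[C]_3.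
have -> : T13 = actc (T13 - l *: outer a b c) h.
  tcases; rewrite ?actcE ?actbE sum3 !subE !T13E !mxE /= ?b2z ?b3z ?hc1 ?hc2; ring.
exact: actc_rank.
Qed.

Lemma S2 (a : 'rV[C]_2) (b c : 'rV[C]_3) l : (a 0 0 != 0 \/ a 0 1 != 0) ->
  c 0 0 = 0 -> c 0 1 = 0 -> a 0 0 * b 0 1 + a 0 1 * b 0 2 = 0 ->
  ~ rank_le (T13 - l *: outer a b c) 3.
Proof.
move=> an c1z c2z g H; apply: T13_not3.
have [k [hb2 hb3]] : exists k, b 0 1 = k * - a 0 1 /\ b 0 2 = k * a 0 0.
  apply: par; first by case: an => h; [right|left]; rewrite ?oppr_eq0.
  have -> : - a 0 1 * b 0 2 - a 0 0 * b 0 1 = - (a 0 0 * b 0 1 + a 0 1 * b 0 2) by ring.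
  by rewrite g oppr0.
pose h := \matrix_(m < 3, n < 3) ((m == n)%:R + l * c 0 2 * b 0 m *
   (if val n == 0%N then 0 else if val n == 1%N then a 0 0 else a 0 1)) : 'M[C]_3.
have -> : T13 = actb (T13 - l *: outer a b c) h.
  tcases; rewrite ?actcE ?actbE sum3 !subE !T13E !mxE /= ?c1z ?c2z ?hb2 ?hb3; ring.
exact: actb_rank.
Qed.

Definition slice (T : tensor) (i : 'I_2) : 'M[C]_3 := \matrix_(j, k) T (i, j, k).

Lemma diag_rank (T : tensor) (X Y : 'M[C]_3) : \det X != 0 -> \det Y != 0 ->
  (forall i (r r' : 'I_3), r != r' -> (X *m slice T i *m Y) r r' = 0) -> rank_le T 3.
Proof.
move=> dX dY H.
have Xu : X \in unitmx by rewrite unitmxE unitfE.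
have Yu : Y \in unitmx by rewrite unitmxE unitfE.
pose D i := X *m slice T i *m Y.
have S i : slice T i = invmx X *m D i *m invmx Y.
  by rewrite /D !mulmxA mulVmx // mul1mx -mulmxA mulmxV // mulmx1.
have Z : forall i (r r' : 'I_3), r != r' -> D i r r' = 0 by exact: H.
clearbody D.
exists (fun r => \row_i D i r r), (fun r => \row_j invmx X j r), (fun r => \row_k invmx Y r k).
apply/ffunP => -[[i j] k].
have -> : T (i, j, k) = slice T i j k by rewrite mxE.
rewrite S sum_ffunE sum3 !ffunE !mxE !sum3 !mxE !sum3 /=.
rewrite (Z i 0 1) // (Z i 0 2) // (Z i 1 0) // (Z i 1 2) // (Z i 2 0) // (Z i 2 1) //.
ring.
Qed.

Lemma N1 (a : 'rV[C]_2) (b c : 'rV[C]_3) :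
  a 0 0 * c 0 0 + a 0 1 * c 0 1 != 0 -> a 0 0 * b 0 1 + a 0 1 * b 0 2 != 0 ->
  b 0 2 * c 0 0 - b 0 1 * c 0 1 != 0 -> rank_le (T13 - 1 *: outer a b c) 3.
Proof.
set mu := a 0 0 * c 0 0 + a 0 1 * c 0 1.
set nu := a 0 0 * b 0 1 + a 0 1 * b 0 2.
set g := b 0 2 * c 0 0 - b 0 1 * c 0 1.
move=> mun nun gn.
pose X := \matrix_(r < 3, j < 3)
  (if val r == 0%N then (if val j == 0%N then 0 else if val j == 1%N then a 0 0 else a 0 1)
   else if val r == 1%N then (if val j == 0%N then 0 else if val j == 1%N then b 0 2 else - b 0 1)
   else (if val j == 0%N then mu * g else if val j == 1%N then
           mu * b 0 2 * c 0 2 - c 0 1 * (1 - mu * b 0 0)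
         else c 0 0 * (1 - mu * b 0 0) - mu * b 0 1 * c 0 2)) : 'M[C]_3.
pose Y := \matrix_(j < 3, r < 3)
  (if val r == 0%N then (if val j == 0%N then a 0 0 else if val j == 1%N then a 0 1 else 0)
   else if val r == 1%N then
     (if val j == 0%N then nu * b 0 0 * c 0 1 - b 0 2 * (1 - nu * c 0 2)
      else if val j == 1%N then b 0 1 * (1 - nu * c 0 2) - nu * b 0 0 * c 0 0
      else nu * (b 0 1 * c 0 1 - b 0 2 * c 0 0))
   else (if val j == 0%N then c 0 1 else if val j == 1%N then - c 0 0 else 0)) : 'M[C]_3.
apply: (@diag_rank _ X Y).
- rewrite (_ : \det X = - (mu * g * nu)) ?oppr_eq0 ?mulf_neq0 //.
  by rewrite det3 !mxE /= /mu /g /nu; ring.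
- rewrite (_ : \det Y = - (mu * g * nu)) ?oppr_eq0 ?mulf_neq0 //.
  by rewrite det3 !mxE /= /mu /g /nu; ring.
move=> i r r'.
case: (ord2 i) => ->; case: (ord3 r) => [->|[->|->]]; case: (ord3 r') => [->|[->|->]] //= _;
  rewrite !mxE !sum3 !mxE !sum3 !mxE !subE !T13E /= /mu /g /nu; ring.
Qed.

Lemma N2 (a : 'rV[C]_2) (b c : 'rV[C]_3) :
  b 0 2 * c 0 0 - b 0 1 * c 0 1 = 0 -> ~ (c 0 0 = 0 /\ c 0 1 = 0) ->
  a 0 0 * c 0 0 + a 0 1 * c 0 1 != 0 -> phi a b c != 0 ->
  rank_le (T13 - (phi a b c)^-1 *: outer a b c) 3.
Proof.
move=> gbc cn gn pn.
have [k [hb2 hb3]] : exists k, b 0 1 = k * c 0 0 /\ b 0 2 = k * c 0 1.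
  apply: par.
    by case: (eqVneq (c 0 0) 0) => [c1z|c1n]; [right; apply/eqP => c2z; apply: cn|left].
  by rewrite -gbc; ring.
apply: (@rank3_intro _ (mk2 (a 0 0 / phi a b c) (a 0 1 / phi a b c))
  (mk2 (c 0 1 / (a 0 0 * c 0 0 + a 0 1 * c 0 1)) (- c 0 0 / (a 0 0 * c 0 0 + a 0 1 * c 0 1)))
  (mk2 (c 0 1 / (a 0 0 * c 0 0 + a 0 1 * c 0 1)) (- c 0 0 / (a 0 0 * c 0 0 + a 0 1 * c 0 1)))
  (mk3 (- c 0 2) (c 0 0) (c 0 1)) (mk3 1 0 0) (mk3 0 (a 0 1) (- a 0 0))
  (mk3 (- b 0 1) (- b 0 2) (b 0 0)) (mk3 (a 0 1) (- a 0 0) 0) (mk3 0 0 1)).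
move: pn; rewrite /phi /x1 /x2 /y1 /y2 /y3 hb2 hb3 => pn.
tcases; rewrite !subE !T13E !ffunE !mxE /= ?hb2 ?hb3; field.
all: by repeat (apply/andP; split).
Qed.

Lemma N3 (a : 'rV[C]_2) (b c : 'rV[C]_3) :
  b 0 1 = 0 -> b 0 2 = 0 -> b 0 0 != 0 -> a 0 0 * c 0 0 + a 0 1 * c 0 1 != 0 ->
  rank_le (T13 - (b 0 0 * (a 0 0 * c 0 0 + a 0 1 * c 0 1))^-1 *: outer a b c) 3.
Proof.
set g := a 0 0 * c 0 0 + a 0 1 * c 0 1.
move=> b2z b3z b1n gn.
apply: (@rank3_intro _ (mk2 (c 0 1 / g) (- c 0 0 / g)) (mk2 1 0) (mk2 0 1)
  (mk3 1 0 0) (mk3 (- a 0 0 * c 0 2 / g) 1 0) (mk3 (- a 0 1 * c 0 2 / g) 0 1)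
  (mk3 (a 0 1) (- a 0 0) 0) (mk3 0 0 1) (mk3 0 0 1)).
tcases; rewrite !subE !T13E !ffunE !mxE /= ?b2z ?b3z /g; field.
all: by repeat (apply/andP; split).
Qed.

Lemma N4 (a : 'rV[C]_2) (b c : 'rV[C]_3) :
  c 0 0 = 0 -> c 0 1 = 0 -> c 0 2 != 0 -> a 0 0 * b 0 1 + a 0 1 * b 0 2 != 0 ->
  rank_le (T13 - (c 0 2 * (a 0 0 * b 0 1 + a 0 1 * b 0 2))^-1 *: outer a b c) 3.
Proof.
set g := a 0 0 * b 0 1 + a 0 1 * b 0 2.
move=> c1z c2z c3n gn.
apply: (@rank3_intro _ (mk2 (b 0 2 / g) (- b 0 1 / g)) (mk2 1 0) (mk2 0 1)
  (mk3 0 (a 0 1) (- a 0 0)) (mk3 1 0 0) (mk3 1 0 0)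
  (mk3 0 0 1) (mk3 1 0 (- a 0 0 * b 0 0 / g)) (mk3 0 1 (- a 0 1 * b 0 0 / g))).
tcases; rewrite !subE !T13E !ffunE !mxE /= ?c1z ?c2z /g; field.
all: by repeat (apply/andP; split).
Qed.


Lemma vec2_nz (a : 'rV[C]_2) : a != 0 -> a 0 0 != 0 \/ a 0 1 != 0.
Proof.
move=> an; case: (eqVneq (a 0 0) 0) => [h0|]; last by left.
case: (eqVneq (a 0 1) 0) => [h1|]; last by right.
move: an; have -> : a = 0; last by rewrite eqxx.
apply/matrixP => i j; rewrite mxE (ord1 i).
by case: (ord2 j) => ->.
Qed.

Lemma vec3_nz (b : 'rV[C]_3) : b != 0 -> ~ (b 0 0 = 0 /\ b 0 1 = 0 /\ b 0 2 = 0).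
Proof.
move=> bn [h0 [h1 h2]]; move: bn; have -> : b = 0; last by rewrite eqxx.
apply/matrixP => i j; rewrite mxE (ord1 i).
by case: (ord3 j) => [->|[->|->]].
Qed.

Lemma trank_T13 : trank T13 = 4%N.
Proof.
have h1 := @trank_le _ _ rank4_T13.
apply/eqP; rewrite eqn_leq h1 /= ltnNge; apply/negP => H; apply: T13_not3.
exact: (@rank_le_mono _ _ _ H (trank_spec _)).
Qed.

Lemma forbiddenE P : forbidden T13 P <-> forall l, ~ rank_le (T13 - l *: P) 3.
Proof.
rewrite /forbidden trank_T13; split => H l.
  by move=> /trank_le; have := H l; case: (trank _) => [|[|[|[|n]]]].
rewrite leqNgt; apply/negP => Hl; apply: (H l).
by apply: (@rank_le_mono _ _ _ _ (trank_spec _)); rewrite -ltnS.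
Qed.

Lemma nz_dec (x : C) : x = 0 \/ x != 0.
Proof. by case: (eqVneq x 0); [left|right]. Qed.

Lemma and_dec (x y : C) : (x = 0 /\ y = 0) \/ ~ (x = 0 /\ y = 0).
Proof.
case: (eqVneq x 0) => hx; last by right => -[hx0]; move: hx; rewrite hx0 eqxx.
case: (eqVneq y 0) => hy; first by left.
by right => -[_ hy0]; move: hy; rewrite hy0 eqxx.
Qed.

Theorem mainTheorem8 (a : 'rV[C]_2) (b c : 'rV[C]_3) :
  a != 0 -> b != 0 -> c != 0 ->
  (forbidden T13 (outer a b c) <->
   ( ((x1 a * y1 c + x2 a * y2 c = 0 \/ x1 a * y2 b + x2 a * y3 b = 0) /\
      ~ (y2 b = 0 /\ y3 b = 0) /\ ~ (y1 c = 0 /\ y2 c = 0))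
   \/
     ((y3 b * y1 c - y2 b * y2 c = 0 \/ x1 a * y1 c + x2 a * y2 c = 0 \/
       x1 a * y2 b + x2 a * y3 b = 0) /\ phi a b c = 0))).
Proof.
move=> /vec2_nz an /vec3_nz bn /vec3_nz cn.
rewrite forbiddenE /x1 /x2 /y1 /y2 /y3.
have phiE : phi a b c = b 0 0 * (a 0 0 * c 0 0 + a 0 1 * c 0 1) +
    c 0 2 * (a 0 0 * b 0 1 + a 0 1 * b 0 2) by rewrite /phi /x1 /x2 /y1 /y2 /y3; ring.
split.
- move=> H.
  have [[b2z b3z]|b23n] : (b 0 1 = 0 /\ b 0 2 = 0) \/ ~ (b 0 1 = 0 /\ b 0 2 = 0).
    exact: and_dec.
  + right; split; first by right; right; rewrite b2z b3z; ring.
    case: (nz_dec (phi a b c)) => // pn; exfalso.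
    have b1n : b 0 0 != 0 by apply/eqP => b1z; apply: bn.
    have gn : a 0 0 * c 0 0 + a 0 1 * c 0 1 != 0.
      by apply/eqP => g0; move: pn; rewrite phiE g0 b2z b3z; rewrite (_ : _ + _ = 0) ?eqxx //; ring.
    exact: (H _ (@N3 a b c b2z b3z b1n gn)).
  have [[c1z c2z]|c12n] : (c 0 0 = 0 /\ c 0 1 = 0) \/ ~ (c 0 0 = 0 /\ c 0 1 = 0).
    exact: and_dec.
  + right; split; first by left; rewrite c1z c2z; ring.
    case: (nz_dec (phi a b c)) => // pn; exfalso.
    have c3n : c 0 2 != 0 by apply/eqP => c3z; apply: cn.
    have gn : a 0 0 * b 0 1 + a 0 1 * b 0 2 != 0.
      by apply/eqP => g0; move: pn; rewrite phiE g0 c1z c2z; rewrite (_ : _ + _ = 0) ?eqxx //; ring.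
    exact: (H _ (@N4 a b c c1z c2z c3n gn)).
  case: (nz_dec (a 0 0 * c 0 0 + a 0 1 * c 0 1)) => gac.
    by left; split => //; left.
  case: (nz_dec (a 0 0 * b 0 1 + a 0 1 * b 0 2)) => gab.
    by left; split => //; right.
  case: (nz_dec (b 0 2 * c 0 0 - b 0 1 * c 0 1)) => gbc; last first.
    by exfalso; apply: (H 1); apply: N1.
  case: (nz_dec (phi a b c)) => pn; first by right; split => //; left.
  by exfalso; apply: (H _ (@N2 a b c gbc c12n gac pn)).
- move=> Hc l.
  case: (eqVneq l 0) => [->|ln].
    by rewrite scale0r subr0; exact: T13_not3.
  case: Hc => [[[g|g] [b23n c12n]]|[hg hphi]].
  + exact: R1.
  + exact: R2.
  have [[b2z b3z]|b23n] : (b 0 1 = 0 /\ b 0 2 = 0) \/ ~ (b 0 1 = 0 /\ b 0 2 = 0).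
    exact: and_dec.
    have b1n : b 0 0 != 0 by apply/eqP => b1z; apply: bn.
    apply: S1 => //.
    have : b 0 0 * (a 0 0 * c 0 0 + a 0 1 * c 0 1) = 0 by rewrite -hphi phiE b2z b3z; ring.
    by move/eqP; rewrite mulf_eq0 (negbTE b1n) => /eqP.
  have [[c1z c2z]|c12n] : (c 0 0 = 0 /\ c 0 1 = 0) \/ ~ (c 0 0 = 0 /\ c 0 1 = 0).
    exact: and_dec.
    have c3n : c 0 2 != 0 by apply/eqP => c3z; apply: cn.
    apply: S2 => //.
    have : c 0 2 * (a 0 0 * b 0 1 + a 0 1 * b 0 2) = 0 by rewrite -hphi phiE c1z c2z; ring.
    by move/eqP; rewrite mulf_eq0 (negbTE c3n) => /eqP.
  case: hg => [gbc|[g|g]]; [|exact: R1|exact: R2].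
  case: (nz_dec (a 0 0 * c 0 0 + a 0 1 * c 0 1)) => gac; first exact: R1.
  exact: R3.
Qed.
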